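(* There exists a protocol that estimates the sharpness $\mathcal{S}(\{M_i\}_i)=\frac{1}{d}\sum_i\operatorname{Tr}(M_i^2)$ with constant additive error, and thus solves the black-box distinguishing task below with constant success probability, using $\mathcal{O}(1)$ queries, provided that the black box outputs both classical outcomes and post-measurement quantum states $\rho_i = K_i\rho K_i^\dagger/\operatorname{Tr}(K_i\rho K_i^\dagger)$, and the measurement operators $K_i$ are normal operators.
   Context: A quantum measurement on a $d$-dimensional system is described by measurement (Kraus) operators $\{K_i\}_i$ with $\sum_i K_i^\dagger K_i = \mathbb{I}$ and POVM $\{M_i = K_i^\dagger K_i\}_i$; outcome $i$ occurs with probability $\operatorname{Tr}(\rho K_i^\dagger K_i)$ and the post-measurement state is $\rho_i = K_i\rho K_i^\dagger/\operatorname{Tr}(K_i\rho K_i^\dagger)$. Black-box distinguishing task: given query access to a measurement device, distinguish between, with equal prior probability, (i) a device that outputs $i \in \{0,\dots,d-1\}$ uniformly at random and leaves the input state unchanged (sharpness $1/d$), and (ii) a device performing the projective measurement $\{\Pi_i = U |i\rangle\langle i| U^\dagger\}_{i=0}^{d-1}$ for an unknown Haar random unitary $U$, outputting $i$ and collapsing the input to the post-measurement state (sharpness $1$). The protocol: prepare the maximally mixed state $\mathbb{I}/d$, measure it and keep the post-measurement state, measure again with the same device, and record whether the two outcomes agree; the agreement probability equals the sharpness when $[K_i,K_i^\dagger]=0$. *)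

(* Defs.v *)
From HB Require Import structures.
From mathcomp Require Import all_boot all_order all_algebra.
From mathcomp Require Import algC.
Set Implicit Arguments. Unset Strict Implicit. Unset Printing Implicit Defensive.
Import Order.TTheory GRing.Theory Num.Theory.
Local Open Scope ring_scope.

Definition adj (m n : nat) (A : 'M[algC]_(m, n)) : 'M[algC]_(n, m) :=
  (map_mx (fun z : algC => z^*) A)^T.

Definition is_kraus (d n : nat) (K : 'I_n -> 'M[algC]_d) : Prop :=
  \sum_(i < n) adj (K i) *m K i = 1%:M.

Definition normal_op (d : nat) (A : 'M[algC]_d) : Prop :=
  A *m adj A = adj A *m A.

Definition unitary (d : nat) (U : 'M[algC]_d) : Prop :=
  adj U *m U = 1%:M /\ U *m adj U = 1%:M.

Definition povm (d n : nat) (K : 'I_n -> 'M[algC]_d) (i : 'I_n) : 'M[algC]_d :=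
  adj (K i) *m K i.

Definition sharpness (d n : nat) (K : 'I_n -> 'M[algC]_d) : algC :=
  (d%:R)^-1 * \sum_(i < n) \tr (povm K i *m povm K i).

Definition meas_prob (d n : nat) (K : 'I_n -> 'M[algC]_d) (rho : 'M[algC]_d)
  (i : 'I_n) : algC := \tr (rho *m povm K i).

Definition post_state (d n : nat) (K : 'I_n -> 'M[algC]_d) (rho : 'M[algC]_d)
  (i : 'I_n) : 'M[algC]_d :=
  (\tr (K i *m rho *m adj (K i)))^-1 *: (K i *m rho *m adj (K i)).

Definition max_mixed (d : nat) : 'M[algC]_d := (d%:R)^-1 *: 1%:M.

(* One round of the protocol: prepare I/d, measure (outcome i, keep the
   post-measurement state), measure again (outcome j); probability that i = j. *)
Definition agree_prob (d n : nat) (K : 'I_n -> 'M[algC]_d) : algC :=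
  \sum_(i < n) meas_prob K (max_mixed d) i
               * meas_prob K (post_state K (max_mixed d) i) i.

(* N independent rounds (2N queries): probability that the number k of
   rounds with agreeing outcomes satisfies E, when each round agrees with
   probability p. *)
Definition binom_prob (N : nat) (p : algC) (E : pred nat) : algC :=
  \sum_(k < N.+1 | E k) 'C(N, k)%:R * p ^+ k * (1 - p) ^+ (N - k).

(* Device (i): uniformly random outcome in {0..d-1}, state unchanged:
   K_i = (1/sqrt d) I. *)
Definition unif_dev (d : nat) : 'I_d -> 'M[algC]_d :=
  fun _ => (sqrtC d%:R)^-1 *: 1%:M.
Arguments unif_dev : clear implicits.

Definition proj_dev (d : nat) (U : 'M[algC]_d) : 'I_d -> 'M[algC]_d :=
  fun i => U *m delta_mx i i *m adj U.

(* Success probability (equal priors) of the protocol that runs N rounds and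
   answers "device (ii)" iff decide k, k = number of agreeing rounds. *)
Definition success (N : nat) (decide : nat -> bool) (d n0 n1 : nat)
  (K0 : 'I_n0 -> 'M[algC]_d) (K1 : 'I_n1 -> 'M[algC]_d) : algC :=
  2^-1 * binom_prob N (agree_prob K0) (fun k => ~~ decide k)
  + 2^-1 * binom_prob N (agree_prob K1) decide.

(* Main.v *)
Require Import Defs.
From HB Require Import structures.
From mathcomp Require Import all_boot all_order all_algebra.
From mathcomp Require Import algC.
From mathcomp Require Import ring lra.
Import Order.TTheory GRing.Theory Num.Theory.
Local Open Scope ring_scope.

Lemma adjE m n (A : 'M[algC]_(m, n)) i j : adj A i j = (A j i)^*.
Proof. by rewrite /adj !mxE. Qed.

Lemma adjM m n p (A : 'M[algC]_(m, n)) (B : 'M[algC]_(n, p)) :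
  adj (A *m B) = adj B *m adj A.
Proof.
apply/matrixP=> i j; rewrite !mxE rmorph_sum; apply: eq_bigr => k _.
by rewrite !adjE rmorphM mulrC.
Qed.

Lemma adjK m n (A : 'M[algC]_(m, n)) : adj (adj A) = A.
Proof. by apply/matrixP=> i j; rewrite !adjE conjCK. Qed.

Lemma adj_scalar n (c : algC) : adj (c%:M : 'M_n) = c^*%:M.
Proof. apply/matrixP=> i j; rewrite adjE !mxE eq_sym; case: (i == j); by rewrite ?rmorph0 ?rmorph_nat ?mulr1n ?mulr0n. Qed.

Lemma adj_delta n (i j : 'I_n) : adj (delta_mx i j) = delta_mx j i.
Proof. apply/matrixP=> a b; rewrite adjE !mxE; by case: (a == j); case: (b == i); rewrite /= ?rmorph0 ?rmorph1. Qed.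

Lemma tr_adj m n (A : 'M[algC]_(m, n)) :
  \tr (A *m adj A) = \sum_i \sum_j `|A i j| ^+ 2.
Proof.
rewrite /mxtrace; apply: eq_bigr => i _; rewrite mxE; apply: eq_bigr => j _.
by rewrite adjE normCK.
Qed.

Lemma tr_adj_ge0 m n (A : 'M[algC]_(m, n)) : 0 <= \tr (A *m adj A).
Proof. by rewrite tr_adj; apply: sumr_ge0 => i _; apply: sumr_ge0 => j _; apply: exprn_ge0. Qed.

Lemma tr_adj_eq0 m n (A : 'M[algC]_(m, n)) : \tr (A *m adj A) = 0 -> A = 0.
Proof.
rewrite tr_adj => /eqP; rewrite psumr_eq0; last first.
  by move=> i _; apply: sumr_ge0 => j _; apply: exprn_ge0.
move=> /allP H; apply/matrixP=> i j; rewrite mxE.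
have := H i (mem_index_enum i); rewrite /= psumr_eq0; last by move=> k _; apply: exprn_ge0.
move=> /allP /(_ j (mem_index_enum j)) /=.
by rewrite expf_eq0 /= normr_eq0 => /eqP.
Qed.
Lemma agree_sharp d n (K : 'I_n -> 'M[algC]_d) :
  (0 < d)%N -> (forall i, normal_op (K i)) -> agree_prob K = sharpness K.
Proof.
move=> d0 nK; rewrite /agree_prob /sharpness mulr_sumr; apply: eq_bigr => i _.
have c0 : (d%:R : algC)^-1 != 0 by rewrite invr_eq0 pnatr_eq0 -lt0n.
rewrite /meas_prob /post_state /max_mixed.
rewrite -!scalemxAl !mul1mx -scalemxAr mulmx1 -scalemxAl mxtraceZ.
rewrite -!scalemxAl !mxtraceZ /povm -(nK i).
set M := K i *m adj (K i).
have [t0|t0] := eqVneq (\tr M) 0.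
  have K0 : K i = 0 by apply: tr_adj_eq0.
  by rewrite /M K0 !mul0mx mxtrace0 !mulr0.
rewrite invfM invrK; field.
by rewrite pnatr_eq0 -lt0n d0; exact: t0.
Qed.
Lemma trMM_ge0 d n (K : 'I_n -> 'M[algC]_d) i j : 0 <= \tr (povm K i *m povm K j).
Proof.
rewrite /povm -!mulmxA mxtrace_mulC !mulmxA.
have -> : K i *m adj (K j) *m K j *m adj (K i) = (K i *m adj (K j)) *m adj (K i *m adj (K j)).
  by rewrite adjM adjK !mulmxA.
exact: tr_adj_ge0.
Qed.

Lemma sharp_bounds d n (K : 'I_n -> 'M[algC]_d) :
  (0 < d)%N -> is_kraus K -> 0 <= sharpness K <= 1.
Proof.
move=> d0 kK.
have dpos : (0 : algC) < d%:R by rewrite ltr0n.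
have tot : \sum_i \sum_j \tr (povm K i *m povm K j) = d%:R.
  have : \tr ((\sum_i povm K i) *m (\sum_j povm K j)) = d%:R.
    by rewrite /povm kK mulmx1 mxtrace1.
  rewrite mulmx_suml raddf_sum => <-; apply: eq_bigr => i _.
  by rewrite mulmx_sumr raddf_sum.
have S0 : 0 <= \sum_i \tr (povm K i *m povm K i).
  by apply: sumr_ge0 => i _; apply: trMM_ge0.
have S1 : \sum_i \tr (povm K i *m povm K i) <= d%:R.
  rewrite -tot; apply: ler_sum => i _.
  rewrite (bigD1 i) //= lerDl; apply: sumr_ge0 => j _; apply: trMM_ge0.
rewrite /sharpness; apply/andP; split.
  by apply: mulr_ge0 => //; rewrite invr_ge0 ltW.
by rewrite mulrC ler_pdivrMr // mul1r.
Qed.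
Definition bw (N : nat) (p : algC) (k : nat) : algC :=
  'C(N, k)%:R * p ^+ k * (1 - p) ^+ (N - k).

Lemma mom0 N p : \sum_(k < N.+1) bw N p k = 1.
Proof.
have := exprDn (1 - p) p N; rewrite subrK expr1n => ->.
apply: eq_bigr => k _; rewrite /bw -mulr_natl; ring.
Qed.

Lemma mom_shift L p (f : nat -> algC) :
  \sum_(k < L.+2) k%:R * f k * bw L.+1 p k =
  L.+1%:R * p * \sum_(j < L.+1) f j.+1 * bw L p j.
Proof.
rewrite big_ord_recl /= mulr0n !mul0r add0r mulr_sumr; apply: eq_bigr => j _.
rewrite /bw /bump /= add1n subSS.
have H : (j.+1%:R * 'C(L.+1, j.+1)%:R : algC) = L.+1%:R * 'C(L, j)%:R.
  by rewrite -!natrM -mul_bin_diag.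
rewrite exprS.
transitivity (f j.+1 * (j.+1%:R * 'C(L.+1, j.+1)%:R) * (p * (p ^+ j * (1 - p) ^+ (L - j)))).
  move: (p ^+ j) ((1 - p) ^+ (L - j)) (f j.+1) ('C(L.+1, j.+1)%:R : algC) (j.+1%:R : algC) => a b c e g.
  ring.
rewrite H.
move: (p ^+ j) ((1 - p) ^+ (L - j)) (f j.+1) ('C(L, j)%:R : algC) (L.+1%:R : algC) => a b c e g.
ring.
Qed.

Lemma mom1 N p : \sum_(k < N.+1) k%:R * bw N p k = N%:R * p.
Proof.
case: N => [|L]; first by rewrite big_ord1 !mul0r.
have := mom_shift L p (fun _ => 1); under eq_bigr do rewrite mulr1.
move=> ->; under eq_bigr do rewrite mul1r. by rewrite mom0 mulr1.
Qed.

Lemma mom2 N p : \sum_(k < N.+1) k%:R ^+ 2 * bw N p k = N%:R * p * ((N%:R - 1) * p + 1).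
Proof.
case: N => [|L]; first by rewrite big_ord1 /= expr2 !mul0r.
have := mom_shift L p (fun k => k%:R); under eq_bigr do rewrite -expr2.
move=> ->; congr (_ * _).
under eq_bigr do rewrite -addn1 natrD mulrDl mul1r.
by rewrite big_split /= mom1 mom0 -addn1 natrD addrK.
Qed.
Lemma bw_ge0 N p k : 0 <= p <= 1 -> 0 <= bw N p k.
Proof.
move=> /andP[p0 p1]; rewrite /bw; apply: mulr_ge0; first apply: mulr_ge0.
- exact: ler0n.
- exact: exprn_ge0.
- by apply: exprn_ge0; rewrite subr_ge0.
Qed.

Lemma var_bw N p :
  \sum_(k < N.+1) bw N p k * (k%:R - N%:R * p) ^+ 2 = N%:R * p * (1 - p).
Proof.
transitivity (\sum_(k < N.+1) (k%:R ^+ 2 * bw N p k - (2 * N%:R * p) * (k%:R * bw N p k)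
   + (N%:R * p) ^+ 2 * bw N p k)).
  apply: eq_bigr => k _; move: (bw N p k) (k%:R : algC) => b x; ring.
rewrite big_split /= sumrB -!mulr_sumr mom2 mom1 mom0; ring.
Qed.

Lemma cheb N p eps : 0 <= p <= 1 -> 0 < eps -> (0 < N)%N ->
  1 - (N%:R * eps ^+ 2)^-1 <=
  binom_prob N p (fun k => `|k%:R / N%:R - p| <= eps).
Proof.
move=> p01 e0 N0.
have /andP[p0 p1] := p01.
have Npos : (0 : algC) < N%:R by rewrite ltr0n.
have Ne0 : 0 < N%:R * eps ^+ 2 by rewrite mulr_gt0 // exprn_gt0.
set E := (fun k : nat => _).
have -> : binom_prob N p E = 1 - \sum_(k < N.+1 | ~~ E k) bw N p k.
  rewrite -(mom0 N p) (bigID (fun k : 'I_N.+1 => E k)) /= addrK.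
  by rewrite /binom_prob.
rewrite lerD2l lerN2.
apply: (@le_trans _ _ (\sum_(k < N.+1 | ~~ E k) bw N p k * (k%:R - N%:R * p) ^+ 2 / (N%:R * eps) ^+ 2)).
  apply: ler_sum => k /negP nE.
  have bk := @bw_ge0 N p k p01.
  rewrite -mulrA -{1}[bw N p k]mulr1; apply: ler_wpM2l => //.
  have Ne : 0 < (N%:R * eps) ^+ 2 by rewrite exprn_gt0 // mulr_gt0.
  rewrite ler_pdivlMr // mul1r.
  have xr : k%:R / N%:R - p \is Num.real.
    by apply: realB; apply: ger0_real => //; apply: divr_ge0; apply: ler0n.
  have lt : eps < `|k%:R / N%:R - p|.
    rewrite real_ltNge ?normr_real ?(ger0_real (ltW e0)) //; apply/negP; exact: nE.
  have -> : (k%:R - N%:R * p) = N%:R * (k%:R / N%:R - p).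
    by rewrite mulrBr mulrCA divff ?mulr1 // lt0r_neq0.
  rewrite !exprMn; apply: ler_wpM2l; first exact: exprn_ge0 (ler0n _ _).
  rewrite -(real_normK xr) ler_pXn2r //; first exact: ltW.
    by rewrite nnegrE ltW.
  by rewrite nnegrE normr_ge0.
apply: (@le_trans _ _ (\sum_(k < N.+1) bw N p k * (k%:R - N%:R * p) ^+ 2 / (N%:R * eps) ^+ 2)).
  rewrite [X in _ <= X](bigID (fun k : 'I_N.+1 => ~~ E k)) /= lerDl.
  apply: sumr_ge0 => k _; apply: mulr_ge0; last by rewrite invr_ge0 exprn_ge0 // mulr_ge0 ?ltW.
  apply: mulr_ge0; first exact: bw_ge0.
  have rr : (k%:R - N%:R * p) \is Num.real by rewrite realB ?realM ?realn ?ger0_real.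
  by rewrite -(real_normK rr) exprn_ge0 ?normr_ge0.
rewrite -mulr_suml var_bw.
have -> : (N%:R * eps ^+ 2)^-1 = N%:R / (N%:R * eps) ^+ 2.
  have N0' : (N%:R : algC) != 0 by rewrite lt0r_neq0.
  have e0' : eps != 0 by rewrite lt0r_neq0.
  by field; rewrite N0' e0'.
rewrite ler_wpM2r //; first by rewrite invr_ge0 exprn_ge0 // mulr_ge0 // ltW.
rewrite -mulrA -{2}[N%:R]mulr1; apply: ler_wpM2l; first exact: ler0n.
apply: (@le_trans _ _ (p * 1)); first by apply: ler_wpM2l => //; rewrite gerBl.
by rewrite mulr1.
Qed.
Lemma unif_agree d : (0 < d)%N -> agree_prob (unif_dev d) = d%:R^-1.
Proof.
move=> d0.
have dn0 : (d%:R : algC) != 0 by rewrite pnatr_eq0 -lt0n.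
have Ke : forall i, unif_dev d i = ((sqrtC (d%:R : algC))^-1)%:M.
  by move=> i; rewrite /unif_dev scalemx1.
have c2 : (sqrtC (d%:R : algC))^-1 * (sqrtC (d%:R : algC))^-1 = d%:R^-1.
  by rewrite -expr2 exprVn sqrtCK.
have cK : ((sqrtC (d%:R : algC))^-1)^* = (sqrtC (d%:R : algC))^-1.
  by apply: geC0_conj; rewrite invr_ge0 sqrtC_ge0 ler0n.
move: c2 cK Ke; move: (sqrtC (d%:R : algC))^-1 => c c2 cK Ke.
rewrite agree_sharp //; last first.
  by move=> i; rewrite /normal_op Ke adj_scalar cK.
rewrite /sharpness /povm.
under eq_bigr do rewrite Ke adj_scalar cK.
rewrite -!scalar_mxM mxtrace_scalar sumr_const card_ord c2.
field; exact: dn0.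
Qed.
Lemma tr_delta n (i : 'I_n) : \tr (delta_mx i i : 'M[algC]_n) = 1.
Proof.
rewrite /mxtrace (bigD1 i) //= big1 ?addr0; first by rewrite mxE !eqxx.
by move=> j /negPf ji; rewrite mxE ji.
Qed.

Lemma proj_agree d (U : 'M[algC]_d) : (0 < d)%N -> unitary U ->
  agree_prob (proj_dev U) = 1.
Proof.
move=> d0 [U1 U2].
have dn0 : (d%:R : algC) != 0 by rewrite pnatr_eq0 -lt0n.
have Ka : forall i, adj (proj_dev U i) = proj_dev U i.
  by move=> i; rewrite /proj_dev !adjM adjK adj_delta !mulmxA.
have KK : forall i, proj_dev U i *m proj_dev U i = proj_dev U i.
  move=> i; rewrite /proj_dev !mulmxA -[U *m _ *m _ *m U]mulmxA U1 mulmx1.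
  by rewrite -[U *m _ *m _]mulmxA mul_delta_mx.
rewrite agree_sharp //; last by move=> i; rewrite /normal_op Ka.
rewrite /sharpness /povm.
under eq_bigr do rewrite Ka !KK /proj_dev mxtrace_mulC mulmxA U1 mul1mx tr_delta.
by rewrite sumr_const card_ord mulVf.
Qed.
Theorem theorem2 :
  (forall eps delta : algC, 0 < eps -> 0 < delta ->
     exists N : nat,
       forall (d n : nat) (K : 'I_n -> 'M[algC]_d),
         (0 < d)%N -> is_kraus K -> (forall i, normal_op (K i)) ->
         1 - delta <=
           binom_prob N (agree_prob K)
             (fun k => `|k%:R / N%:R - sharpness K| <= eps))
  /\
  (exists (N : nat) (decide : nat -> bool),
     forall (d : nat) (U : 'M[algC]_d), (1 < d)%N -> unitary U ->
       2 / 3 <= success N decide (unif_dev d) (proj_dev U)).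
Proof.
split.
  move=> eps delta e0 dl0.
  have x0 : 0 <= delta^-1 / eps ^+ 2.
    apply: divr_ge0; first by rewrite invr_ge0 (ltW dl0).
    exact: exprn_ge0 (ltW e0).
  exists (Num.Def.archi_bound (delta^-1 / eps ^+ 2)).+1.
  move=> d n K d0 kK nK.
  rewrite agree_sharp //.
  apply: le_trans _ (cheb _ _ _ (sharp_bounds _ _ _ d0 kK) e0 (ltn0Sn _)).
  rewrite lerD2l lerN2.
  rewrite -[X in _ <= X]invrK lef_pV2 ?posrE ?invr_gt0 ?mulr_gt0 ?exprn_gt0 ?ltr0Sn //.
  rewrite -ler_pdivrMr ?exprn_gt0 //.
  apply: le_trans (ltW (archi_boundP x0)) _.
  by rewrite ler_nat.
exists 1%N, (fun k => k == 1%N).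
move=> d U d1 uU.
have d0 : (0 < d)%N by apply: ltnW.
rewrite /success unif_agree // proj_agree // /binom_prob.
rewrite !big_mkcond !big_ord_recr big_ord0 /=.
rewrite big_mkcond !big_ord_recr big_ord0 /=.
rewrite !(bin0, bin1, expr0, expr1, subn0, subnn, add0r, addr0, mul1r, mulr1, expr1n, subrr).
have hd : (d%:R : algC)^-1 <= 2^-1.
  rewrite lef_pV2 ?posrE ?ltr0n //; first by rewrite ler_nat.
rewrite -subr_ge0.
have -> : 2^-1 * (1 - (d%:R : algC)^-1) + 2^-1 - 2 / 3 = (2^-1 - d%:R^-1) * 2^-1 + 6^-1 * 2^-1.
  by field; rewrite pnatr_eq0 -lt0n.
apply: addr_ge0; apply: mulr_ge0; rewrite ?invr_ge0 ?ler0n ?subr_ge0 //.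
Qed.
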